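(* For all $j_1,j_2\in\tfrac12\mathbb{N}^+$, every entry of $R^{(j_1,j_2)}(t)$ (a Laurent polynomial in $t$) has degree at most $4j_1j_2$ in $t$, and \[ \lim_{t\to\infty}\frac{R^{(j_1,j_2)}(t)}{t^{4j_1j_2}}=q^{2j_1j_2}\widehat R^{(j_1,j_2)}, \] i.e. the matrix of coefficients of $t^{4j_1j_2}$ in $R^{(j_1,j_2)}(t)$ equals $q^{2j_1j_2}\widehat R^{(j_1,j_2)}$.
   Context: $\mathbb{F}$ is a field of characteristic zero in which every element has a square root; $q\in\mathbb{F}$ nonzero, not a root of unity, with fixed square root $q^{1/2}$ ($q^{k/2}:=(q^{1/2})^k$); other $(\cdot)^{1/2}$ are fixed square roots in $\mathbb{F}$. $[n]_q=\frac{q^n-q^{-n}}{q-q^{-1}}$, $c(t)=t-t^{-1}$, $\tfrac12\mathbb{N}^+=\{\tfrac12,1,\tfrac32,\dots\}$, $t$ an indeterminate, $\otimes$ Kronecker product. Leg notation: for factors $\mathbb{F}^{n_1}\otimes\mathbb{F}^{n_2}\otimes\mathbb{F}^{n_3}$, $X_{12}=X\otimes I_{n_3}$, $X_{23}=I_{n_1}\otimes X$, $X_{13}=P(X\otimes I_{n_2})P$ with $P$ the flip of factors 2,3; for non-square $Y$, $Y_{12}=Y\otimes I_{n_3}$, $Y_{23}=I_{n_1}\otimes Y$. For $j\in\tfrac12\mathbb{N}^+$: $\mathcal{E}^{(j+\frac12)}$ is $(4j+2)\times(2j+2)$ with only nonzero entries $\mathcal{E}_{(a,a)}=\big(\frac{[2j+2-a]_q}{[2j+1]_q}\big)^{1/2}$,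 $\mathcal{E}_{(a+2j+1,a+1)}=\big(\frac{[a]_q}{[2j+1]_q}\big)^{1/2}$ ($1\le a\le 2j+1$); $\mathcal{F}^{(j+\frac12)}$ is $(2j+2)\times(4j+2)$ with only nonzero entries $\mathcal{F}_{(a,a)}=\frac{([2j+2-a]_q[2j+1]_q)^{1/2}}{[2j+2-a]_q+[a-1]_q}$, $\mathcal{F}_{(a+1,a+2j+1)}=\frac{([a]_q[2j+1]_q)^{1/2}}{[2j+1-a]_q+[a]_q}$ ($1\le a\le 2j+1$). $R^{(\frac12,\frac12)}(t)$ is the $4\times4$ matrix with rows $(c(qt),0,0,0),(0,c(t),c(q),0),(0,c(q),c(t),0),(0,0,0,c(qt))$; recursively $R^{(\frac12,j+\frac12)}(t)=\mathcal{F}^{(j+\frac12)}_{23}R^{(\frac12,j)}_{13}(q^{-1/2}t)R^{(\frac12,\frac12)}_{12}(q^{j}t)\mathcal{E}^{(j+\frac12)}_{23}$ (factor sizes $2,2,2j+1$) and $R^{(j_1+\frac12,j_2)}(t)=\mathcal{F}^{(j_1+\frac12)}_{12}R^{(\frac12,j_2)}_{13}(q^{-j_1}t)R^{(j_1,j_2)}_{23}(q^{1/2}t)\mathcal{E}^{(j_1+\frac12)}_{12}$ (factor sizes $2,2j_1+1,2j_2+1$). $\widehat R^{(j_1,j_2)}=q^{2\,\mathrm{diag}(j_1,\dots,-j_1)\otimes\mathrm{diag}(j_2,\dots,-j_2)}$ (diagonal with entries $q^{2\alpha\beta}$). *)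

(* Defs.v *)
From HB Require Import structures.
From mathcomp Require Import all_boot all_order all_algebra.
From mathcomp Require Import mxtens.
Set Implicit Arguments. Unset Strict Implicit. Unset Printing Implicit Defensive.
Import Order.TTheory GRing.Theory Num.Theory.
Local Open Scope ring_scope.

(* Conventions.
   - A half-integer j in (1/2)N^+ is encoded by the natural number n with
     2j = n.+1 (so the dimension 2j+1 is n.+2).
   - Kronecker products are mathcomp-real-closed's [tensmx] (A *t B), whose
     index convention is (i1,i2) |-> i1 * dim2 + i2 (the usual Kronecker one).
   - Laurent-polynomial matrices in t: a pair (s, P) with P a matrix of
     ordinary polynomials, standing for t^(-s) * P(t).  The coefficient of
     t^d (d >= 0) of the entry (i,j) is P i j at index d + s, and the entry
     has degree <= d iff size (P i j) <= d + s + 1.  These notions do not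
     depend on the representative. *)

Section RMatrices.
Variable F : fieldType.
Variable sqrtF : F -> F.
Variable qh : F.

Definition qq : F := qh ^+ 2.
Definition qnum (n : nat) : F := (qq ^+ n - qq ^- n) / (qq - qq^-1).

Record lmx (m n : nat) := LMx { lsh : nat; lpm : 'M[{poly F}]_(m, n) }.

Definition leval m n (A : lmx m n) (t : F) : 'M[F]_(m, n) :=
  map_mx (fun p => t ^- lsh A * p.[t]) (lpm A).

Definition lmul m n p (A : lmx m n) (B : lmx n p) : lmx m p :=
  LMx (lsh A + lsh B) (lpm A *m lpm B).
Definition lconst m n (M : 'M[F]_(m, n)) : lmx m n := LMx 0 (map_mx polyC M).
(* A(t) |-> A(c t) *)
Definition lscale m n (c : F) (A : lmx m n) : lmx m n :=
  LMx (lsh A) (map_mx (fun p => c ^- lsh A *: (p \Po (c *: 'X))) (lpm A)).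
Definition lcast m n m' n' (e : (m = m') * (n = n')) (A : lmx m n) : lmx m' n' :=
  LMx (lsh A) (castmx e (lpm A)).

Definition ldeg_le m n (d : nat) (A : lmx m n) : Prop :=
  forall i j, (size (lpm A i j) <= d + lsh A + 1)%N.
Definition lcoef m n (d : nat) (A : lmx m n) : 'M[F]_(m, n) :=
  \matrix_(i, j) (lpm A i j)`_(d + lsh A).

Definition leg12 n1 n2 n3 (X : lmx (n1 * n2) (n1 * n2)) : lmx (n1 * n2 * n3) (n1 * n2 * n3) :=
  LMx (lsh X) (lpm X *t (1%:M : 'M_n3)).
Definition leg23 n1 n2 n3 (X : lmx (n2 * n3) (n2 * n3)) : lmx (n1 * n2 * n3) (n1 * n2 * n3) :=
  lcast (mulnA n1 n2 n3, mulnA n1 n2 n3) (LMx (lsh X) ((1%:M : 'M_n1) *t lpm X)).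
Definition flipmx n1 n2 n3 : 'M[{poly F}]_(n1 * n2 * n3, n1 * n3 * n2) :=
  \matrix_(i, k)
    (let: (i12, i3) := mxtens_unindex i in let: (i1, i2) := mxtens_unindex i12 in
     let: (k13, k2) := mxtens_unindex k in let: (k1, k3) := mxtens_unindex k13 in
     ((i1 == k1) && (i2 == k2) && (i3 == k3))%:R).
Definition leg13 n1 n2 n3 (X : lmx (n1 * n3) (n1 * n3)) : lmx (n1 * n2 * n3) (n1 * n2 * n3) :=
  LMx (lsh X) (flipmx n1 n2 n3 *m (lpm X *t (1%:M : 'M_n2)) *m (flipmx n1 n2 n3)^T).

(* E^(j+1/2) and F^(j+1/2) for 2j = N (N >= 1); 0-based indices.
   Square roots of products/quotients of quantum integers are taken as
   products/quotients of the fixed square roots. *)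
Definition Emx (N : nat) : 'M[F]_(2 * N.+1, N.+2) :=
  \matrix_(r, c)
    (if (r == c :> nat) && (c <= N)%N then sqrtF (qnum (N.+1 - r)%N) / sqrtF (qnum N.+1)
     else if ((r : nat) == (c : nat) + N)%N && (0 < c)%N then sqrtF (qnum c) / sqrtF (qnum N.+1)
     else 0).
Definition Fmx (N : nat) : 'M[F]_(N.+2, 2 * N.+1) :=
  \matrix_(r, c)
    (if (r == c :> nat) && (c <= N)%N then
       sqrtF (qnum (N.+1 - r)%N) * sqrtF (qnum N.+1) / (qnum (N.+1 - r)%N + qnum r)
     else if ((c : nat) == (r : nat) + N)%N && (0 < r)%N then
       sqrtF (qnum r) * sqrtF (qnum N.+1) / (qnum (N.+1 - r)%N + qnum r)
     else 0).

Definition R11 : lmx (2 * 2) (2 * 2) :=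
  LMx 1 (\matrix_(i, j)
    (if ((i == 0 :> nat) && (j == 0 :> nat)) || ((i == 3 :> nat) && (j == 3 :> nat))
     then qq *: 'X ^+ 2 - (qq^-1)%:P
     else if ((i == 1 :> nat) && (j == 1 :> nat)) || ((i == 2 :> nat) && (j == 2 :> nat))
     then 'X ^+ 2 - 1
     else if ((i == 1 :> nat) && (j == 2 :> nat)) || ((i == 2 :> nat) && (j == 1 :> nat))
     then (qq - qq^-1) *: 'X
     else 0)).

(* Rh n = R^(1/2, j) with 2j = n.+1 *)
Fixpoint Rh (n : nat) : lmx (2 * n.+2) (2 * n.+2) :=
  match n as n0 return lmx (2 * n0.+2) (2 * n0.+2) with
  | 0 => R11
  | m.+1 =>
    (* j = (m+1)/2, factor sizes 2, 2, 2j+1 = m.+2 *)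
    let F23 := lconst (castmx (erefl, mulnA 2%N 2%N m.+2)
                 ((1%:M : 'M[F]_2) *t Fmx m.+1)) in
    let R13 := @leg13 2%N 2%N m.+2 (lscale (qh ^-1) (Rh m)) in
    let R12 := @leg12 2%N 2%N m.+2 (lscale (qh ^+ m.+1) R11) in
    let E23 := lconst (castmx (mulnA 2%N 2%N m.+2, erefl)
                 ((1%:M : 'M[F]_2) *t Emx m.+1)) in
    lmul (lmul (lmul F23 R13) R12) E23
  end.

(* Rmat n1 n2 = R^(j1, j2) with 2 j1 = n1.+1, 2 j2 = n2.+1 *)
Fixpoint Rmat (n1 n2 : nat) : lmx (n1.+2 * n2.+2) (n1.+2 * n2.+2) :=
  match n1 as n0 return lmx (n0.+2 * n2.+2) (n0.+2 * n2.+2) with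
  | 0 => Rh n2
  | m.+1 =>
    (* j1 = (m+1)/2, factor sizes 2, 2 j1 + 1 = m.+2, 2 j2 + 1 = n2.+2 *)
    let F12 := lconst (Fmx m.+1 *t (1%:M : 'M[F]_(n2.+2))) in
    let R13 := @leg13 2%N m.+2 n2.+2 (lscale (qh ^- m.+1) (Rh n2)) in
    let R23 := @leg23 2%N m.+2 n2.+2 (lscale qh (Rmat m n2)) in
    let E12 := lconst (Emx m.+1 *t (1%:M : 'M[F]_(n2.+2))) in
    lmul (lmul (lmul F12 R13) R23) E12
  end.

(* hat R^(j1,j2): diagonal with entries q^(2 alpha beta) = qh^((2alpha)(2beta)),
   alpha = j1 - i1, beta = j2 - i2 (0-based i1, i2). *)
Definition Rhat (n1 n2 : nat) : 'M[F]_(n1.+2 * n2.+2) :=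
  \matrix_(i, k)
    (let: (i1, i2) := mxtens_unindex i in
     (i == k)%:R *
     qh ^ (((n1.+1)%:Z - 2 * (i1 : nat)%:Z) * ((n2.+1)%:Z - 2 * (i2 : nat)%:Z))).

End RMatrices.

(* Main.v *)
Require Import Defs.
From HB Require Import structures.
From mathcomp Require Import all_boot all_order all_algebra.
From mathcomp Require Import mxtens.
From mathcomp Require Import zify ring.
Set Implicit Arguments. Unset Strict Implicit. Unset Printing Implicit Defensive.
Import Order.TTheory GRing.Theory Num.Theory.
Local Open Scope ring_scope.

Section Gen.
Variable F : fieldType.

Definition dg n (f : 'I_n -> F) : 'M[F]_n := diag_mx (\row_k f k).

Lemma dgE n (f : 'I_n -> F) i j : dg f i j = (i == j)%:R * f i.
Proof. by rewrite !mxE; case: eqP => _; rewrite ?mul1r ?mul0r ?mulr1n ?mulr0n. Qed.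

Lemma dg_eq n (f g : 'I_n -> F) : f =1 g -> dg f = dg g.
Proof. by move=> fg; apply/matrixP=> i j; rewrite !dgE fg. Qed.

Lemma dgM n (f g : 'I_n -> F) : dg f *m dg g = dg (fun i => f i * g i).
Proof. by rewrite mulmx_diag; congr diag_mx; apply/matrixP=> i j; rewrite !mxE. Qed.

Lemma ldeg_leP m n d (A : lmx F m n) :
  ldeg_le d A <-> forall i j k, (d + lsh A + 1 <= k)%N -> (lpm A i j)`_k = 0.
Proof.
split=> [H i j k hk| H i j]; first by apply: (leq_sizeP _ _ (H i j)).
by apply/leq_sizeP=> k hk; apply: H.
Qed.

Lemma lcoefE m n d (A : lmx F m n) i j : lcoef d A i j = (lpm A i j)`_(d + lsh A).
Proof. by rewrite mxE. Qed.

Lemma coefM_top (p q : {poly F}) a b :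
  (size p <= a.+1)%N -> (size q <= b.+1)%N ->
  (size (p * q)%R <= (a + b).+1)%N /\ (p * q)`_(a + b) = p`_a * q`_b.
Proof.
move=> hp hq; split.
  apply: leq_trans (size_polyMleq p q) _.
  have := leq_add hp hq; lia.
rewrite coefM (bigD1 (Ordinal (leq_addr b a.+1)))//= addKn big1 ?addr0 // => i hi.
have {}hi : (i : nat) != a by apply: contra hi => /eqP h; apply/eqP/val_inj.
case: (ltngtP i a) hi => // h _.
  by rewrite [q`__](leq_sizeP _ _ hq) ?mulr0 //; move: h; case: i => k /= _; lia.
by rewrite [p`__](leq_sizeP _ _ hp) ?mul0r.
Qed.

Lemma lmul_lead m n p d1 d2 (A : lmx F m n) (B : lmx F n p) :
  ldeg_le d1 A -> ldeg_le d2 B ->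
  ldeg_le (d1 + d2) (lmul A B) /\ lcoef (d1 + d2) (lmul A B) = lcoef d1 A *m lcoef d2 B.
Proof.
move=> hA hB.
have key (i : 'I_m) (j : 'I_p) l : (size (lpm A i l * lpm B l j)%R <= (d1 + lsh A + (d2 + lsh B)).+1)%N /\
   (lpm A i l * lpm B l j)`_(d1 + lsh A + (d2 + lsh B)) = (lpm A i l)`_(d1 + lsh A) * (lpm B l j)`_(d2 + lsh B).
  by apply: coefM_top; rewrite -addn1; [apply: hA | apply: hB].
have e : (d1 + d2 + lsh (lmul A B) = d1 + lsh A + (d2 + lsh B))%N.
  by rewrite /= addnACA.
split.
  move=> i j; rewrite /= mxE e addn1; apply: leq_trans (size_sum _ _ _) _.
  by apply/bigmax_leqP => l _; case: (key i j l).
apply/matrixP=> i j; rewrite !mxE e /= coef_sum; apply: eq_bigr => l _.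
by case: (key i j l) => _ ->; rewrite !mxE.
Qed.

Lemma lconst_lead m n (M : 'M[F]_(m, n)) : ldeg_le 0 (lconst M) /\ lcoef 0 (lconst M) = M.
Proof.
split; first by move=> i j; rewrite /= mxE size_polyC; case: (_ != 0).
by apply/matrixP=> i j; rewrite !mxE coefC.
Qed.

Lemma coef_scale (c : F) (p : {poly F}) k : (p \Po (c *: 'X))`_k = c ^+ k * p`_k.
Proof.
rewrite coef_comp_poly.
have -> : \sum_(i < size p) p`_i * ((c *: 'X) ^+ i)`_k = \sum_(i < size p) (if (i : nat) == k then p`_i * c ^+ i else 0).
  apply: eq_bigr => i _; rewrite exprZn coefZ coefXn eq_sym.
  by case: eqP => _; rewrite ?mulr1 ?mulr0.
case: (ltnP k (size p)) => hk.
  rewrite (bigD1 (Ordinal hk)) //= eqxx big1 ?addr0 1?mulrC // => i hi.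
  by case: eqP => // h; case/eqP: hi; apply: val_inj.
rewrite big1 ?(leq_sizeP _ _ hk) ?mulr0 // => i _.
by case: eqP => // h; move: (ltn_ord i); rewrite h ltnNge hk.
Qed.

Lemma lscale_lead m n d (c : F) (A : lmx F m n) : c != 0 -> ldeg_le d A ->
  ldeg_le d (lscale c A) /\ lcoef d (lscale c A) = c ^+ d *: lcoef d A.
Proof.
move=> c0 hA; split.
  apply/ldeg_leP => i j k hk; rewrite /= mxE coefZ coef_scale.
  by rewrite (leq_sizeP _ _ (hA i j)) ?mulr0.
apply/matrixP => i j; rewrite !mxE coefZ coef_scale /= exprD.
have h : c ^+ lsh A != 0 by rewrite expf_neq0.
by field.
Qed.



Notation unidx := mxtens_unindex.
Notation idx := mxtens_index.

Lemma idx_eq m n (p q : 'I_m * 'I_n) : (idx p == idx q) = (p == q).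
Proof. exact: (can_eq (@mxtens_indexK m n)). Qed.

Lemma sum_pick (R : pzRingType) (I : finType) (s : I) (X : I -> R) : \sum_k ((k == s)%:R * X k) = X s.
Proof.
rewrite (bigD1 s) //= eqxx mul1r big1 ?addr0 // => k /negbTE ->.
by rewrite mul0r.
Qed.

Lemma leg_gen m n d (X : lmx F m m) (Y : lmx F n n) (u : 'I_n -> 'I_m)
  (T : finType) (w : 'I_n -> T) (f : 'I_m -> F) :
  lsh Y = lsh X -> (forall i j, lpm Y i j = lpm X (u i) (u j) * (w i == w j)%:R) ->
  (forall i j, (u i == u j) && (w i == w j) = (i == j)) ->
  ldeg_le d X -> lcoef d X = dg f -> ldeg_le d Y /\ lcoef d Y = dg (fun i => f (u i)).
Proof.
move=> hs he hinj hX hc; split.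
  by move=> i j; rewrite he hs; case: (w i == w j); rewrite ?mulr1 ?mulr0 ?size_poly0 ?hX.
apply/matrixP => i j; rewrite lcoefE he hs dgE -hinj.
move/matrixP: hc => /(_ (u i) (u j)); rewrite lcoefE dgE => hc.
by case: (w i == w j); rewrite ?mulr1 ?mulr0 ?coef0 ?hc ?andbT ?andbF ?mul0r.
Qed.

Lemma leg12_lead n1 n2 n3 d (X : lmx F (n1 * n2) (n1 * n2)) f :
  ldeg_le d X -> lcoef d X = dg f ->
  ldeg_le d (leg12 n3 X) /\ lcoef d (leg12 n3 X) = dg (fun i => f (unidx i).1).
Proof.
apply: (leg_gen (w := fun i => (unidx i).2)) => // i j.
  by rewrite /= !mxE.
by rewrite -(can_eq (@mxtens_unindexK _ _) i j); case: (unidx i) => a b; case: (unidx j) => a' b'.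
Qed.

Lemma leg13_lead n1 n2 n3 d (X : lmx F (n1 * n3) (n1 * n3)) f :
  ldeg_le d X -> lcoef d X = dg f ->
  ldeg_le d (leg13 n2 X) /\
  lcoef d (leg13 n2 X) = dg (fun i => f (idx ((unidx (unidx i).1).1, (unidx i).2))).
Proof.
pose s (i : 'I_(n1 * n2 * n3)) : 'I_(n1 * n3 * n2) :=
  idx (idx ((unidx (unidx i).1).1, (unidx i).2), (unidx (unidx i).1).2).
have hfl i k : flipmx F n1 n2 n3 i k = (k == s i)%:R.
  case: (mxtens_indexP i) => i12 i3; case: (mxtens_indexP i12) => i1 i2.
  case: (mxtens_indexP k) => k13 k2; case: (mxtens_indexP k13) => k1 k3.
  rewrite mxE /s !mxtens_indexK /= !(idx_eq, xpair_eqE) (eq_sym k1) (eq_sym k2) (eq_sym k3).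
  by case: (i1 == k1); case: (i2 == k2); case: (i3 == k3).
have hM (M : 'M[{poly F}]_(n1 * n3 * n2)) i j :
    (flipmx F n1 n2 n3 *m M *m (flipmx F n1 n2 n3)^T) i j = M (s i) (s j).
  have h1 l : (flipmx F n1 n2 n3 *m M) i l = M (s i) l.
    rewrite mxE; transitivity (\sum_k ((k == s i)%:R * M k l)).
      by apply: eq_bigr => k _; rewrite hfl.
    exact: (sum_pick (s i) (fun k => M k l)).
  rewrite mxE; transitivity (\sum_l ((l == s j)%:R * M (s i) l)).
    by apply: eq_bigr => l _; rewrite h1 mxE hfl mulrC.
  exact: (sum_pick (s j) (fun l => M (s i) l)).
apply: (leg_gen (w := fun i => (unidx (unidx i).1).2)) => // i j.
  by rewrite /= hM /s mxE !mxtens_indexK /= mxE.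
case: (mxtens_indexP i) => i12 i3; case: (mxtens_indexP i12) => i1 i2.
case: (mxtens_indexP j) => j12 j3; case: (mxtens_indexP j12) => j1 j2.
rewrite !mxtens_indexK /= !(idx_eq, xpair_eqE).
by case: (i1 == j1); case: (i2 == j2); case: (i3 == j3).
Qed.


Lemma castA n1 n2 n3 (i : 'I_(n1 * n2 * n3)) :
  cast_ord (esym (mulnA n1 n2 n3)) i =
  idx ((unidx (unidx i).1).1, idx ((unidx (unidx i).1).2, (unidx i).2)).
Proof.
case: (mxtens_indexP i) => i12 i3; case: (mxtens_indexP i12) => i1 i2.
rewrite !mxtens_indexK /=; apply: val_inj => /=.
by rewrite mulnDl -mulnA addnA.
Qed.

Lemma leg23_lead n1 n2 n3 d (X : lmx F (n2 * n3) (n2 * n3)) f :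
  ldeg_le d X -> lcoef d X = dg f ->
  ldeg_le d (leg23 n1 X) /\
  lcoef d (leg23 n1 X) = dg (fun i => f (idx ((unidx (unidx i).1).2, (unidx i).2))).
Proof.
apply: (leg_gen (w := fun i => (unidx (unidx i).1).1)) => // i j.
  by rewrite /= castmxE /= !castA tensmxE mxE mulrC.
case: (mxtens_indexP i) => i12 i3; case: (mxtens_indexP i12) => i1 i2.
case: (mxtens_indexP j) => j12 j3; case: (mxtens_indexP j12) => j1 j2.
rewrite !mxtens_indexK /= !(idx_eq, xpair_eqE).
by case: (i1 == j1); case: (i2 == j2); case: (i3 == j3).
Qed.

Variable sqrtF : F -> F.
Variable qh : F.
Hypothesis Hchar : [pchar F] =i pred0.
Hypothesis Hsqrt : forall x : F, sqrtF x ^+ 2 = x.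
Hypothesis Hqh : qh != 0.
Hypothesis Hq : forall k : nat, (0 < k)%N -> (qh ^+ 2) ^+ k != 1.

Local Notation x := (qq qh).
Local Notation qn := (qnum qh).

Lemma x_neq0 : x != 0.
Proof. by rewrite /qq expf_neq0. Qed.

Lemma two_neq0 : (2%:R : F) != 0.
Proof. by rewrite ((pcharf0P F).1 Hchar 2). Qed.

Lemma qden_neq0 : x - x^-1 != 0.
Proof.
apply/negP => /eqP h.
have : x ^+ 2 = 1.
  have := congr1 (fun y => y * x) h; rewrite mul0r mulrBl mulVf ?x_neq0 //.
  by move/eqP; rewrite subr_eq0 => /eqP; rewrite expr2.
by move/eqP; rewrite (negbTE (Hq _)).
Qed.

Lemma qn0 : qn 0 = 0.
Proof. by rewrite /qnum !expr0 invr1 subrr mul0r. Qed.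

Lemma qsum_neq0 a b : (0 < a + b)%N -> qn a + qn b != 0.
Proof.
move=> hab; apply/negP => /eqP h.
have hA : x ^+ a != 0 by rewrite expf_neq0 ?x_neq0.
have hB : x ^+ b != 0 by rewrite expf_neq0 ?x_neq0.
have hd := qden_neq0.
have e : (x ^+ a + x ^+ b) * (x ^+ a * x ^+ b - 1) =
    x ^+ a * x ^+ b * (x - x^-1) * (qn a + qn b).
  rewrite /qnum; field; rewrite x_neq0 hA hB /= andbT.
  by rewrite subr_eq0 -expr2 Hq.
move: e; rewrite h mulr0 => /eqP; rewrite mulf_eq0 => /orP [].
  wlog lab : a b hab h hA hB / (a <= b)%N.
    move=> W; case: (leqP a b) => l; first exact: W.
    by rewrite addrC; apply: W; rewrite 1?addnC 1?addrC // ltnW.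
  rewrite -(subnK lab) exprD.
  have -> : x ^+ a + x ^+ (b - a) * x ^+ a = (1 + x ^+ (b - a)) * x ^+ a by rewrite mulrDl mul1r.
  rewrite mulf_eq0 (negbTE hA) orbF.
  case: (posnP (b - a)) => hba.
    by rewrite hba expr0 -[1 + 1]/(2%:R : F) (negbTE two_neq0).
  rewrite addr_eq0 => /eqP e.
  have : (0 < 2 * (b - a))%N by rewrite muln_gt0 hba.
  move/Hq.
  have e2 : x ^+ (b - a) = -1 by rewrite e opprK.
  by rewrite -[qh ^+ 2]/(qq qh) mulnC exprM e2 sqrrN expr1n eqxx.
rewrite -exprD subr_eq0; apply/negP; exact: Hq.
Qed.

Lemma qnS_neq0 n : qn n.+1 != 0.
Proof. by have := qsum_neq0 (a := n.+1) (b := 0) isT; rewrite qn0 addr0. Qed.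

Lemma sqrt_neq0 y : y != 0 -> sqrtF y != 0.
Proof. by apply: contra => /eqP h; rewrite -[y]Hsqrt h expr0n. Qed.


Definition den N r := qn (N.+1 - r)%N + qn r.

Definition Fn N (r c : nat) : F :=
    (if (r == c) && (c <= N)%N then
       sqrtF (qn (N.+1 - r)%N) * sqrtF (qn N.+1) / (qn (N.+1 - r)%N + qn r)
     else if (c == r + N)%N && (0 < r)%N then
       sqrtF (qn r) * sqrtF (qn N.+1) / (qn (N.+1 - r)%N + qn r)
     else 0).
Definition En N (r c : nat) : F :=
    (if (r == c) && (c <= N)%N then sqrtF (qn (N.+1 - r)%N) / sqrtF (qn N.+1)
     else if (r == c + N)%N && (0 < c)%N then sqrtF (qn c) / sqrtF (qn N.+1)
     else 0).

Lemma FmxE N r c : Fmx sqrtF qh N r c = Fn N r c.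
Proof. by rewrite mxE. Qed.
Lemma EmxE N r c : Emx sqrtF qh N r c = En N r c.
Proof. by rewrite mxE. Qed.

Lemma den_neq0 N r : (r <= N.+1)%N -> den N r != 0.
Proof. by move=> h; apply: qsum_neq0; rewrite subnK. Qed.

Lemma sq_simp a n d : n != 0 -> d != 0 ->
  sqrtF a * sqrtF n / d * (sqrtF a / sqrtF n) = a / d.
Proof.
move=> hn hd; have hs := sqrt_neq0 hn.
rewrite -[a in RHS]Hsqrt; field; by rewrite hs hd.
Qed.

Lemma T0 N r r' c : (c <= N)%N -> (r <= N.+1)%N ->
  Fn N r c * En N c r' = if c == r then (r == r')%:R * (qn (N.+1 - r) / den N r) else 0.
Proof.
move=> hc hr; rewrite /Fn /En.
case: (eqVneq c r) => [<-|hcr].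
  rewrite hc /=.
  case: (eqVneq c r') => [<-|hcr'].
    by rewrite hc /= mul1r /den sq_simp ?qnS_neq0 //; exact: (den_neq0 (leqW hc)).
  case: ifP => [/andP[/eqP h1 h2]|_]; first by exfalso; lia.
  by rewrite mulr0 mul0r.
rewrite /=.
case: ifP => [/andP[/eqP h1 h2]|_]; first by exfalso; lia.
by rewrite mul0r.
Qed.

Lemma T1 N r r' c : (c <= N)%N -> (r <= N.+1)%N ->
  Fn N r (N.+1 + c) * En N (N.+1 + c) r' =
  if c.+1 == r then (r == r')%:R * (qn r / den N r) else 0.
Proof.
move=> hc hr; rewrite /Fn /En.
have e1 : (r == N.+1 + c) && (N.+1 + c <= N)%N = false by apply/negbTE; lia.
have e2 : (N.+1 + c == r') && (r' <= N)%N = false.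
  by apply/negbTE; apply/negP => /andP[/eqP h1 h2]; lia.
rewrite e1 e2.
case: (eqVneq c.+1 r) => [<-|hcr].
  rewrite (_ : N.+1 + c == c.+1 + N = true) /=; last by apply/eqP; lia.
  case: (eqVneq c.+1 r') => [<-|hcr'].
    rewrite (_ : N.+1 + c == c.+1 + N = true) /=; last by apply/eqP; lia.
    by rewrite mul1r sq_simp ?qnS_neq0 ?den_neq0.
  rewrite (_ : (N.+1 + c == r' + N) && (0 < r')%N = false) ?mulr0 ?mul0r //.
  by apply/negbTE; apply/negP => /andP[/eqP h1 h2]; apply: (negP hcr'); apply/eqP; lia.
rewrite (_ : (N.+1 + c == r + N) && (0 < r)%N = false) ?mul0r //.
by apply/negbTE; apply/negP => /andP[/eqP h1 h2]; apply: (negP hcr); apply/eqP; lia.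
Qed.


Lemma sum_idx m n (G : 'I_(m * n) -> F) :
  \sum_k G k = \sum_(a < m) \sum_(b < n) G (idx (a, b)).
Proof.
rewrite pair_big /=; apply: (reindex (fun p : 'I_m * 'I_n => idx (p.1, p.2))).
exists (@mxtens_unindex m n) => i _ /=; first by case: i => a b; rewrite mxtens_indexK.
exact: (mxtens_unindexK i).
Qed.

Lemma sum_if n r (V : F) :
  \sum_(c < n) (if (c : nat) == r then V else 0) = if (r < n)%N then V else 0.
Proof.
elim: n => [|n IH]; first by rewrite big_ord0.
rewrite big_ord_recr /= IH ltnS.
by case: (ltngtP r n); rewrite ?addr0 ?add0r // => ->; rewrite eqxx add0r.
Qed.

Lemma sum_if1 n r (V : F) :
  \sum_(c < n) (if (c : nat).+1 == r then V else 0) = if (0 < r)%N && (r <= n)%N then V else 0.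
Proof.
elim: n => [|n IH]; first by rewrite big_ord0 lt0n leqn0 andNb.
rewrite big_ord_recr /= IH.
case: r {IH} => [|r] /=; first by rewrite addr0.
rewrite eqSS ltnS.
by case: (ltngtP r n); rewrite ?addr0 ?add0r // => ->; rewrite eqxx add0r.
Qed.

Lemma FDE N (g : nat -> F) :
  Fmx sqrtF qh N *m dg (fun k : 'I_(2 * N.+1) => g ((unidx k).1 + (unidx k).2)%N) *m Emx sqrtF qh N
  = dg (fun r : 'I_N.+2 => g r).
Proof.
apply/matrixP => r r'; rewrite [RHS]dgE /dg mul_mx_diag mxE.
under eq_bigr => k _ do rewrite mxE.
under eq_bigr => k _ do rewrite FmxE EmxE mxE.
rewrite sum_idx.
under eq_bigr => a _ do under eq_bigr => b _ do rewrite mxtens_indexK.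
rewrite big_ord_recr big_ord1 /= !mul0n !mul1n.
have hr : (r <= N.+1)%N by rewrite -ltnS.
rewrite (eq_bigr (fun b : 'I_N.+1 => if (b : nat) == r then (r == r')%:R * (qn (N.+1 - r) / den N r) * g r else 0)); last first.
  move=> b _; rewrite add0n mulrAC (@T0 N r r' b) //; last by rewrite -ltnS.
  by case: eqP => [->|]; rewrite ?mul0r.
rewrite [X in (_ + X)%R](eq_bigr (fun b : 'I_N.+1 => if (b : nat).+1 == r then (r == r')%:R * (qn r / den N r) * g r else 0)); last first.
  move=> b _; rewrite mulrAC (@T1 N r r' b) //; last by rewrite -ltnS.
  by rewrite add1n; case: eqP => [->|_]; rewrite ?mul0r.
rewrite sum_if sum_if1.
case: (eqVneq r r') => [_|_]; last by rewrite !mul0r; case: ifP; case: ifP; rewrite ?addr0.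
rewrite !mul1r.
case: (posnP r) => [r0|rpos].
  by rewrite r0 ltn0Sn /= addr0 /den subn0 qn0 addr0 divff ?mul1r ?qnS_neq0.
rewrite hr /=.
case: (ltngtP r N.+1) => h.
- rewrite -mulrDl -mulrDl -[(qn _ + qn r)%R]/(den N r) divff ?mul1r //.
  exact: den_neq0.
- by move: hr; rewrite leqNgt h.
- by rewrite h add0r /den subnn qn0 add0r divff ?mul1r ?qnS_neq0.
Qed.




Lemma dg_tens_sum m n (h : 'I_m -> 'I_n -> F) :
  dg (fun i : 'I_(m * n) => h (unidx i).1 (unidx i).2) =
  \sum_(c < n) dg (fun k => h k c) *t delta_mx c c.
Proof.
apply/matrixP => i j; rewrite summxE.
case: (mxtens_indexP i) => i1 i2; case: (mxtens_indexP j) => j1 j2.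
rewrite dgE !mxtens_indexK idx_eq xpair_eqE.
under eq_bigr => c _ do rewrite tensmxE dgE mxE.
rewrite (bigD1 i2) //= big1 ?addr0 => [|c hc]; last by rewrite (eq_sym i2) (negbTE hc) mulr0.
rewrite eqxx /= (eq_sym j2).
by case: (i1 == j1); case: (i2 == j2); rewrite /= ?mulr1 ?mulr0 ?mul0r ?mul1r.
Qed.

Lemma dg_tens_sum_l m n (h : 'I_m -> 'I_n -> F) :
  dg (fun i : 'I_(m * n) => h (unidx i).1 (unidx i).2) =
  \sum_(a < m) delta_mx a a *t dg (fun k => h a k).
Proof.
apply/matrixP => i j; rewrite summxE.
case: (mxtens_indexP i) => i1 i2; case: (mxtens_indexP j) => j1 j2.
rewrite dgE !mxtens_indexK idx_eq xpair_eqE.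
under eq_bigr => c _ do rewrite tensmxE dgE mxE.
rewrite (bigD1 i1) //= big1 ?addr0 => [|c hc]; last by rewrite (eq_sym i1) (negbTE hc) mul0r.
rewrite eqxx /= (eq_sym j1).
by case: (i1 == j1); case: (i2 == j2); rewrite /= ?mulr1 ?mulr0 ?mul0r ?mul1r.
Qed.

Lemma castmx_sandwich p q a b (e : a = b) (A : 'M[F]_(p, a)) (D : 'M[F]_b) (B : 'M[F]_(a, q)) :
  castmx (erefl, e) A *m D *m castmx (e, erefl) B = A *m castmx (esym e, esym e) D *m B.
Proof. by case: b / e D => D; rewrite !castmx_id. Qed.

Lemma castmx_dg a b (e : a = b) (f : 'I_a -> F) :
  castmx (e, e) (dg f) = dg (fun i => f (cast_ord (esym e) i)).
Proof.
apply/matrixP => i j; rewrite castmxE !dgE /=.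
by rewrite (inj_eq (cast_ord_inj (eq_n := esym e))).
Qed.

Lemma sandB N M2 (G : nat -> 'I_M2 -> F) :
  (Fmx sqrtF qh N *t (1%:M : 'M_M2)) *m
    dg (fun i : 'I_(2 * N.+1 * M2) => G ((unidx (unidx i).1).1 + (unidx (unidx i).1).2)%N (unidx i).2)
  *m (Emx sqrtF qh N *t (1%:M : 'M_M2))
  = dg (fun i : 'I_(N.+2 * M2) => G (unidx i).1 (unidx i).2).
Proof.
rewrite (dg_tens_sum (fun k c => G ((unidx k).1 + (unidx k).2)%N c)).
rewrite mulmx_sumr mulmx_suml.
rewrite (dg_tens_sum (fun (r : 'I_N.+2) c => G r c)).
apply: eq_bigr => c _.
by rewrite !tensmx_mul mul1mx mulmx1 (FDE N (fun s => G s c)).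
Qed.

Lemma sandA N (G : 'I_2 -> nat -> F) :
  castmx (erefl, mulnA 2 2 N.+1) ((1%:M : 'M_2) *t Fmx sqrtF qh N) *m
    dg (fun i : 'I_(2 * 2 * N.+1) => G (unidx (unidx i).1).1 ((unidx (unidx i).1).2 + (unidx i).2)%N)
  *m castmx (mulnA 2 2 N.+1, erefl) ((1%:M : 'M_2) *t Emx sqrtF qh N)
  = dg (fun i : 'I_(2 * N.+2) => G (unidx i).1 (unidx i).2).
Proof.
rewrite castmx_sandwich castmx_dg.
rewrite (@dg_eq _ _ (fun i : 'I_(2 * (2 * N.+1)) => (fun a k => G a ((unidx k).1 + (unidx k).2)%N) (unidx i).1 (unidx i).2)); last first.
  move=> i; case: (mxtens_indexP i) => a k; case: (mxtens_indexP k) => b c.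
  have e : cast_ord (esym (esym (mulnA 2 2 N.+1))) (idx (a, idx (b, c))) = idx (idx (a, b), c).
    by apply: val_inj => /=; rewrite mulnDl -mulnA addnA.
  by rewrite e !mxtens_indexK.
rewrite (dg_tens_sum_l (fun (a : 'I_2) (k : 'I_(2 * N.+1)) => G a ((unidx k).1 + (unidx k).2)%N)) mulmx_sumr mulmx_suml.
rewrite (dg_tens_sum_l (fun (a : 'I_2) (r : 'I_N.+2) => G a r)).
apply: eq_bigr => a _.
by rewrite !tensmx_mul mul1mx mulmx1 (FDE N (fun s => G a s)).
Qed.



Definition Ex (n1 n2 a c : nat) : int :=
  (n1%:Z + 1) * (n2%:Z + 1) + (n1%:Z + 1 - 2 * a%:Z) * (n2%:Z + 1 - 2 * c%:Z).
Definition Tg n1 n2 := dg (fun i : 'I_(n1.+2 * n2.+2) => qh ^ Ex n1 n2 (unidx i).1 (unidx i).2).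

Lemma R11_lead : ldeg_le 1 (R11 qh) /\ lcoef 1 (R11 qh) = Tg 0 0.
Proof.
split.
  apply/ldeg_leP => i j k hk; rewrite /= in hk.
  have k0 : (k == 0)%N = false by apply/negbTE; lia.
  have k1 : (k == 1)%N = false by apply/negbTE; lia.
  have k2 : (k == 2)%N = false by apply/negbTE; lia.
  rewrite /= mxE.
  case: ifP => _; first by rewrite coefB coefZ coefXn coefC k2 k0 mulr0 subr0.
  case: ifP => _; first by rewrite coefB coefXn coef1 k2 k0 subr0.
  case: ifP => _; first by rewrite coefZ coefX k1 mulr0.
  by rewrite coef0.
apply/matrixP => i j; rewrite lcoefE /Tg dgE /= mxE.
case: i => [[|[|[|[|i]]]] hi] //; case: j => [[|[|[|[|j]]]] hj] //=.
all: rewrite ?mul0r ?coef0 ?coefZ ?coefX ?mulr0 //.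
all: rewrite mul1r ?coefB ?coefZ ?coefXn ?coefC ?coef1 /= ?mulr1 ?subr0.
- by have -> : Ex 0 0 (0 %/ 2) (0 %% 2) = 2%:Z by [].
- by have -> : Ex 0 0 (1 %/ 2) (1 %% 2) = 0%:Z by [].
- by have -> : Ex 0 0 (2 %/ 2) (2 %% 2) = 0%:Z by [].
- by have -> : Ex 0 0 (3 %/ 2) (3 %% 2) = 2%:Z by [].
Qed.



Lemma dg_scale n c (f : 'I_n -> F) : c *: dg f = dg (fun i => c * f i).
Proof. by apply/matrixP => i j; rewrite mxE !dgE mulrCA. Qed.

Lemma PoszS n : (n.+1)%:Z = n%:Z + 1.
Proof. by rewrite -addn1 PoszD. Qed.

Lemma Rh_lead n : ldeg_le n.+1 (Rh sqrtF qh n) /\ lcoef n.+1 (Rh sqrtF qh n) = Tg 0 n.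
Proof.
elim: n => [|m [IHd IHc]]; first exact: R11_lead.
have [d13 c13] := lscale_lead (invr_neq0 Hqh) IHd.
rewrite IHc dg_scale in c13.
have [d13' c13'] := leg13_lead 2 d13 c13.
have [d11 c11] := R11_lead.
have [d12 c12] := lscale_lead (c := qh ^+ m.+1) (expf_neq0 _ Hqh) d11.
rewrite c11 dg_scale in c12.
have [d12' c12'] := leg12_lead m.+2 d12 c12.
cbn [Rh].
have [dF cF] := lconst_lead (castmx (erefl, mulnA 2 2 m.+2) ((1%:M : 'M[F]_2) *t Fmx sqrtF qh m.+1)).
have [dE cE] := lconst_lead (castmx (mulnA 2 2 m.+2, erefl) ((1%:M : 'M[F]_2) *t Emx sqrtF qh m.+1)).
have [d1 e1] := lmul_lead dF d13'.
have [d2 e2] := lmul_lead d1 d12'.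
have [d3 e3] := lmul_lead d2 dE.
rewrite e2 e1 cF c13' c12' cE in e3.
move: d3 e3; rewrite add0n addn0 addn1 => d3 e3; split => //.
rewrite e3 -[_ *m _ *m dg _]mulmxA dgM.
pose G := fun (a : 'I_2) (s : nat) => qh ^ Ex 0 m.+1 a s.
rewrite (@dg_eq _ _ (fun i : 'I_(2 * 2 * m.+2) => G (unidx (unidx i).1).1 ((unidx (unidx i).1).2 + (unidx i).2)%N)); last first.
  move=> i; case: (mxtens_indexP i) => k c; case: (mxtens_indexP k) => a b.
  rewrite !mxtens_indexK /= /G expr1 !exprnP exprz_inv -!expfzDr //.
  by congr (qh ^ _); rewrite /Ex !PoszD !PoszS; ring.
exact: (sandA m.+1 G).
Qed.



Lemma Rmat_lead n1 n2 : ldeg_le (n1.+1 * n2.+1) (Rmat sqrtF qh n1 n2) /\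
  lcoef (n1.+1 * n2.+1) (Rmat sqrtF qh n1 n2) = Tg n1 n2.
Proof.
elim: n1 => [|m [IHd IHc]]; first by cbn [Rmat]; rewrite mul1n; exact: Rh_lead.
have [dh ch] := Rh_lead n2.
have [d13 c13] := lscale_lead (c := qh ^- m.+1) (invr_neq0 (expf_neq0 _ Hqh)) dh.
rewrite ch dg_scale in c13.
have [d13' c13'] := leg13_lead m.+2 d13 c13.
have [d23 c23] := lscale_lead (c := qh) Hqh IHd.
rewrite IHc dg_scale in c23.
have [d23' c23'] := leg23_lead 2 d23 c23.
cbn [Rmat].
have [dF cF] := lconst_lead (Fmx sqrtF qh m.+1 *t (1%:M : 'M[F]_(n2.+2))).
have [dE cE] := lconst_lead (Emx sqrtF qh m.+1 *t (1%:M : 'M[F]_(n2.+2))).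
have [d1 e1] := lmul_lead dF d13'.
have [d2 e2] := lmul_lead d1 d23'.
have [d3 e3] := lmul_lead d2 dE.
rewrite e2 e1 cF c13' c23' cE in e3.
move: d3 e3; rewrite add0n addn0 -mulSn => d3 e3; split => //.
rewrite e3 -[_ *m _ *m dg _]mulmxA dgM.
pose G := fun (s : nat) (c : 'I_n2.+2) => qh ^ Ex m.+1 n2 s c.
rewrite (@dg_eq _ _ (fun i : 'I_(2 * m.+2 * n2.+2) => G ((unidx (unidx i).1).1 + (unidx (unidx i).1).2)%N (unidx i).2)); last first.
  move=> i; case: (mxtens_indexP i) => k c; case: (mxtens_indexP k) => a b.
  rewrite !mxtens_indexK /= /G exprVn -exprM exprnN !exprnP -!expfzDr //.
  by congr (qh ^ _); rewrite /Ex !PoszD !PoszM !PoszS; ring.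
exact: (sandB m.+1 G).
Qed.



Lemma Rhat_eq n1 n2 : qh ^+ (n1.+1 * n2.+1) *: Rhat qh n1 n2 = Tg n1 n2.
Proof.
apply/matrixP => i j; rewrite /Tg dgE !mxE.
case: (mxtens_indexP i) => a c; rewrite !mxtens_indexK /=.
rewrite mulrCA exprnP -expfzDr //.
by congr (_ * qh ^ _); rewrite /Ex PoszM !PoszS; ring.
Qed.

Lemma main_sec n1 n2 :
  ldeg_le (n1.+1 * n2.+1) (Rmat sqrtF qh n1 n2) /\
  lcoef (n1.+1 * n2.+1) (Rmat sqrtF qh n1 n2)
    = qh ^+ (n1.+1 * n2.+1) *: Rhat qh n1 n2.
Proof. by rewrite Rhat_eq; exact: Rmat_lead. Qed.

End Gen.

Unset Implicit Arguments.
Set Strict Implicit.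

(* j1 = (n1+1)/2, j2 = (n2+1)/2, so 4 j1 j2 = n1.+1 * n2.+1 and
   q^(2 j1 j2) = qh ^+ (n1.+1 * n2.+1). *)
Theorem proposition5p3 (F : fieldType) (sqrtF : F -> F) (qh : F)
  (Hchar : [pchar F] =i pred0)
  (Hsqrt : forall x : F, sqrtF x ^+ 2 = x)
  (Hqh : qh != 0)
  (Hq : forall k : nat, (0 < k)%N -> (qh ^+ 2) ^+ k != 1)
  (n1 n2 : nat) :
  ldeg_le (n1.+1 * n2.+1) (Rmat sqrtF qh n1 n2) /\
  lcoef (n1.+1 * n2.+1) (Rmat sqrtF qh n1 n2)
    = qh ^+ (n1.+1 * n2.+1) *: Rhat qh n1 n2.
Proof. by apply: main_sec. Qed.
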